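(* Let $\mathbb{R}^p=E^q\oplus E^{p-q}$ be a decomposition with $\dim E^q=q\ge1$ such that the image of $E^q$ in $\mathbb{R}^p/\mathbb{Z}^p$ is dense, fix a scalar product on $E^q$, and let $A\in\mathrm{GL}_p(\mathbb{Z})$ preserve $E^q$ and $E^{p-q}$ with $A|_{E^q}$ a similarity. Then there exists a basis of $\mathbb{R}^p$ consisting of vectors of $\mathbb{Z}^p$ in which the matrix of $A$ is block diagonal, each diagonal block having integer entries and a characteristic polynomial which is irreducible over $\mathbb{Z}$. *)

(* Defs.v *)
From HB Require Import structures.
From mathcomp Require Import all_boot all_order all_algebra.
From mathcomp Require Import reals.
Set Implicit Arguments. Unset Strict Implicit. Unset Printing Implicit Defensive.
Import Order.TTheory GRing.Theory Num.Theory.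
Local Open Scope ring_scope.

(* Vectors of R^n are column vectors 'cV[R]_n; matrices act by left product. *)

Definition mxZR (R : realType) m n (M : 'M[int]_(m, n)) : 'M[R]_(m, n) :=
  map_mx (fun z : int => z%:~R) M.

Definition scal (R : realType) n (S : 'M[R]_n) (u v : 'cV[R]_n) : R :=
  (u^T *m S *m v) 0 0.

Definition scalar_product (R : realType) n (S : 'M[R]_n) : Prop :=
  S^T = S /\ forall c : 'cV[R]_n, c != 0 -> 0 < scal S c c.

Definition irreducible_over_Z (p : {poly int}) : Prop :=
  p != 0 /\ ~~ (p \is a GRing.unit) /\
  forall a b : {poly int}, p = a * b -> a \is a GRing.unit \/ b \is a GRing.unit.

(* Main.v *)
Set Warnings "-notation-overridden,-ambiguous-paths,-notation-incompatible-prefix".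
Require Import Defs.
From HB Require Import structures.
From mathcomp Require Import all_boot all_order all_algebra.
From mathcomp Require Import reals.
From Stdlib Require Import Classical.
From mathcomp Require Import ring zify lra.
Import Order.TTheory GRing.Theory Num.Theory.
Local Open Scope ring_scope.

Set Implicit Arguments. Unset Strict Implicit. Unset Printing Implicit Defensive.

Lemma horner_mx_sum (F : comNzRingType) n' (A : 'M[F]_n'.+1) (p : {poly F}) :
  horner_mx A p = \sum_(i < size p) p`_i *: A ^+ i.
Proof.
rewrite -{1}[p]coefK poly_def rmorph_sum /=; apply: eq_bigr => i _.
by rewrite linearZ /= rmorphXn /= horner_mx_X.
Qed.

Lemma irr_factor (F : fieldType) (f : {poly F}) :
  (1 < size f)%N -> exists g, irreducible_poly g /\ g %| f.
Proof.
move: {2}(size f) (leqnn (size f)) => s; elim: s f => [|s IH] f.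
  by rewrite leqn0 => /eqP ->.
move=> Hs Hf.
have [Hirr|Hn] := classic (irreducible_poly f); first by exists f; rewrite dvdpp.
have [q Hq] : exists q : {poly F}, ~ (size q != 1%N -> q %| f -> q %= f).
  apply: not_all_ex_not => H; apply: Hn; split => //.
have [Hq1 [Hqf Hqe]] : size q != 1%N /\ q %| f /\ ~ (q %= f) by tauto.
have f0 : f != 0 by rewrite -size_poly_gt0 (ltn_trans _ Hf).
have q0 : q != 0 by apply: contra_neq f0 => q0; move: Hqf; rewrite q0 dvd0p => /eqP.
have Hlt : (size q < size f)%N.
  rewrite ltn_neqAle dvdp_leq // andbT; apply/negP => /eqP Hs'.
  by apply: Hqe; rewrite -dvdp_size_eqp // Hs'.
have Hq2 : (1 < size q)%N.
  by rewrite ltn_neqAle eq_sym Hq1 /= size_poly_gt0.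
have Hqs : (size q <= s)%N by rewrite -ltnS (leq_trans Hlt).
have [g [Hg Hgq]] := IH q Hqs Hq2.
by exists g; split => //; apply: dvdp_trans Hgq Hqf.
Qed.

Lemma sqfree_coprime (F : fieldType) n' (N : 'M[F]_n'.+1)
  (SS : forall k : {poly F}, horner_mx N k ^+ 2 = 0 -> horner_mx N k = 0)
  (f g : {poly F}) :
  f %| mxminpoly N -> irreducible_poly g -> g %| f -> coprimep g (f %/ g).
Proof.
move=> fm Hg gf; rewrite irreducible_poly_coprime //; apply/negP => /dvdpP [h2 Hh2].
have /dvdpP [t Ht] := fm.
have Hf : f = h2 * g * g by rewrite -Hh2 divpK.
pose k := g * h2 * t.
have Hm : mxminpoly N = g * k by rewrite Ht Hf /k; ring.
have Hk2 : horner_mx N k ^+ 2 = 0.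
  rewrite -rmorphXn /= (_ : k ^+ 2 = mxminpoly N * (h2 * t)).
    by rewrite rmorphM /= mx_root_minpoly mul0r.
  by rewrite Hm /k; ring.
have /mxminpoly_min Hmk := SS _ Hk2.
have m0 : mxminpoly N != 0 by rewrite monic_neq0 // mxminpoly_monic.
have k0 : k != 0 by apply: contra_neq m0 => k0; rewrite Hm k0 mulr0.
have g0 : g != 0 by apply: irredp_neq0.
have := dvdp_leq k0 Hmk; rewrite Hm size_mul //.
case: Hg => Hg _; move: Hg (size_poly_gt0 k) ; rewrite k0 /=.
case: (size g) => [|[|sg]] //= _; case: (size k) => //= sk _.
lia.
Qed.

Lemma hornerM_mx (F : comNzRingType) n' (N : 'M[F]_n'.+1) p q :
  horner_mx N (p * q) = horner_mx N p *m horner_mx N q.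
Proof. by rewrite rmorphM /= mulmxE. Qed.

Lemma find_vec (F : fieldType) n' (N : 'M[F]_n'.+1)
  (SS : forall k : {poly F}, horner_mx N k ^+ 2 = 0 -> horner_mx N k = 0)
  m0 (W : 'M[F]_(m0, n'.+1)) :
  stablemx W N -> forall u : 'rV_n'.+1, ~~ (u <= W)%MS ->
  exists g, irreducible_poly g /\ g %| mxminpoly N /\
    exists v : 'rV_n'.+1, ~~ (v <= W)%MS /\ v *m horner_mx N g = 0.
Proof.
move=> sW u uW.
have m0' : mxminpoly N != 0 by rewrite monic_neq0 // mxminpoly_monic.
suff H : forall s (f : {poly F}), (size f <= s)%N -> f %| mxminpoly N -> forall u : 'rV_n'.+1,
  u *m horner_mx N f = 0 -> ~~ (u <= W)%MS ->
  exists g, irreducible_poly g /\ g %| mxminpoly N /\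
    exists v : 'rV_n'.+1, ~~ (v <= W)%MS /\ v *m horner_mx N g = 0.
  by apply: (H _ _ (leqnn _) (dvdpp _) u) => //; rewrite mx_root_minpoly mulmx0.
elim=> [|s IH] f Hs fm {}u uf {}uW.
  by move: Hs; rewrite leqn0 size_poly_eq0 => /eqP f0; move: fm m0'; rewrite f0 dvd0p => ->.
have f0 : f != 0 by apply: contra_neq m0' => f0; move: fm; rewrite f0 dvd0p => /eqP.
have [Hf1|Hf1] := leqP (size f) 1.
  move/size1_polyC: Hf1 => Hc; move: f0 uf; rewrite Hc horner_mx_C polyC_eq0.
  move=> c0; rewrite mul_mx_scalar => /eqP; rewrite scaler_eq0 (negPf c0) /= => /eqP u0.
  by move: uW; rewrite u0 sub0mx.
have [g [Hg gf]] := irr_factor Hf1.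
pose h := f %/ g.
have cgh := sqfree_coprime SS fm Hg gf.
have hgf : h * g = f by rewrite divpK.
have /Bezout_eq1_coprimepP [[a b] /= Hab] := cgh.
pose u1 := u *m horner_mx N (a * g); pose u2 := u *m horner_mx N (b * h).
have Hu : u = u1 + u2.
  by rewrite /u1 /u2 -mulmxDr -rmorphD /= Hab rmorph1 mulmx1.
have [u2W|u2W] := boolP (u2 <= W)%MS; last first.
  exists g; split => //; split; first by apply: dvdp_trans gf fm.
  exists u2; split => //.
  rewrite /u2 -mulmxA -hornerM_mx (_ : b * h * g = f * b); last by rewrite -hgf; ring.
  by rewrite hornerM_mx mulmxA uf mul0mx.
have u1W : ~~ (u1 <= W)%MS.
  by apply: contra uW => u1W; rewrite Hu addmx_sub.
have g0 : g != 0 by apply: irredp_neq0.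
have h0 : h != 0 by apply: contra_neq f0 => h0; rewrite -hgf h0 mul0r.
apply: (IH h) u1W.
- move: Hs; rewrite -hgf size_mul //; case: Hg => Hg _; move: Hg (size_poly_gt0 h).
  rewrite h0 => H1 /idP H2 H3; move: H1 H2 H3; move: (size h) (size g) => x y; lia.
- by apply: dvdp_trans fm; rewrite -hgf dvdp_mulr.
- rewrite /u1 -mulmxA -hornerM_mx (_ : a * g * h = f * a); last by rewrite -hgf; ring.
  by rewrite hornerM_mx mulmxA uf mul0mx.
Qed.

Lemma horner_mx_stable' (K : fieldType) m0 n' (V : 'M[K]_(m0, n'.+1)) (f : 'M_n'.+1) p :
  stablemx V f -> stablemx V (horner_mx f p).
Proof.
move=> V_fstab; elim/poly_ind: p => [|p c]; first by rewrite rmorph0 stablemx0.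
move=> fp_stable; rewrite rmorphD rmorphM/= horner_mx_X horner_mx_C.
by rewrite stablemxD ?stablemxM ?fp_stable ?stablemxC.
Qed.

Definition blk (R : pzRingType) n (N : 'M[R]_n) d (v : 'rV[R]_n) : 'M[R]_(d, n) :=
  \matrix_(i < d) (v *m N ^+ i).

Lemma blk_mul (R : comNzRingType) n' (N : 'M[R]_n'.+1) d v (w : 'rV_d) :
  w *m blk N d v = v *m horner_mx N (rVpoly w).
Proof.
rewrite mulmx_sum_row {2}(row_sum_delta w) linear_sum rmorph_sum /= mulmx_sumr.
apply: eq_bigr => i _.
by rewrite rowK !linearZ /= rVpoly_delta rmorphXn /= horner_mx_X scalemxAr.
Qed.

Lemma blk_indep (F : fieldType) n' (N : 'M[F]_n'.+1) m0 (W : 'M[F]_(m0, n'.+1))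
  (g : {poly F}) (v : 'rV_n'.+1) d :
  (d < size g)%N ->
  stablemx W N -> irreducible_poly g -> v *m horner_mx N g = 0 ->
  ~~ (v <= W)%MS ->
  forall w : 'rV_d, (w *m blk N d v <= W)%MS -> w = 0.
Proof.
move=> Hd sW Hg vg vW w; rewrite blk_mul; set c := rVpoly w.
have [c0|c0] := eqVneq c 0.
  by move=> _; rewrite -[w]rVpolyK -/c c0 linear0.
move=> cW; exfalso; move/negP: vW; apply.
have gc : ~~ (g %| c).
  apply/negP => /(dvdp_leq c0); rewrite leqNgt.
  by move: (size_poly d (fun k => if insub k is Some i then w 0 i else 0));
     rewrite -/(rVpoly w) -/c => /leq_ltn_trans ->.
have /Bezout_eq1_coprimepP [[a b] /= Hab] : coprimep g c.
  by rewrite irreducible_poly_coprime.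
have Hv : v *m horner_mx N (a * g) = 0 by rewrite mulrC hornerM_mx mulmxA vg mul0mx.
have -> : v = (v *m horner_mx N c) *m horner_mx N b.
  have E : v = v *m horner_mx N (a * g) + v *m horner_mx N (b * c).
    by rewrite -mulmxDr -rmorphD /= Hab rmorph1 mulmx1.
  by rewrite -mulmxA -hornerM_mx mulrC {1}E Hv add0r.
by apply: submx_trans (submxMr _ cW) (horner_mx_stable' _ sW).
Qed.

Lemma horner_monic_expand (R : comNzRingType) n' (N : 'M[R]_n'.+1) (g : {poly R}) :
  g \is monic ->
  horner_mx N g = \sum_(j < (size g).-1) g`_j *: N ^+ j + N ^+ (size g).-1.
Proof.
move=> gm; have g0 : g != 0 by apply: monic_neq0.
have Hd : (size g).-1.+1 = size g by rewrite -polySpred.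
rewrite horner_mx_sum -Hd big_ord_recr /=; congr (_ + _).
by rewrite -lead_coefE (monicP gm) scale1r.
Qed.

Lemma blk_companion (R : comNzRingType) n' (N : 'M[R]_n'.+1) (g : {poly R}) v :
  g \is monic -> v *m horner_mx N g = 0 ->
  blk N (size g).-1 v *m N = companionmx g *m blk N (size g).-1 v.
Proof.
move=> gm vg; apply/row_matrixP => i.
rewrite row_mul rowK -mulmxA mulmxE -exprSr row_mul.
case: (ltnP i.+1 (size g).-1) => Hi.
  by rewrite rowE mulmx_delta_companion -rowE rowK.
have Hid : i.+1 = (size g).-1 by apply/eqP; rewrite eqn_leq ltn_ord Hi.
rewrite [in RHS]mulmx_sum_row Hid.
move: vg; rewrite horner_monic_expand // mulmxDr => /eqP; rewrite addrC addr_eq0 => /eqP ->.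
rewrite mulmx_sumr -sumrN; apply: eq_bigr => j _.
rewrite rowK !mxE ifT; last by apply/eqP/succn_inj; rewrite Hid prednK // (leq_ltn_trans (leq0n _) (ltn_ord i)).
by rewrite scaleNr -scalemxAr.
Qed.


Lemma rV_scale n (v : 'rV[rat]_n) :
  exists (D : int) (vZ : 'rV[int]_n), D != 0 /\ map_mx intr vZ = D%:~R *: v.
Proof.
have [q [a a0 Hq]] := rat_poly_scale (rVpoly v).
exists a, (\row_i q`_i); split => //; apply/rowP => i; rewrite !mxE.
have := congr1 (fun p : {poly rat} => p`_i) Hq; rewrite /= coef_rVpoly_ord => ->.
rewrite coefZ coef_map /= mulrA mulfV ?mul1r //.
by rewrite intr_eq0.
Qed.

Lemma irr_scale (F : fieldType) (c : F) (g : {poly F}) :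
  c != 0 -> irreducible_poly g -> irreducible_poly (c *: g).
Proof.
move=> c0 [Hs Hg]; split; first by rewrite size_scale.
move=> q q1; rewrite dvdpZr // => qg.
by apply: eqp_trans (Hg q q1 qg) _; rewrite eqp_sym eqp_scale.
Qed.

Lemma irrZ (g : {poly int}) :
  g \is monic -> irreducible_poly g -> irreducible_over_Z g.
Proof.
move=> gm [Hs Hg]; have g0 : g != 0 by apply: monic_neq0.
split=> //; split.
  by rewrite poly_unitE negb_and; apply/orP; left; rewrite neq_ltn Hs orbT.
move=> a b gab.
have a0 : a != 0 by apply: contra_neq g0 => a0; rewrite gab a0 mul0r.
have b0 : b != 0 by apply: contra_neq g0 => b0; rewrite gab b0 mulr0.
have Hl : lead_coef a * lead_coef b = 1 by rewrite -lead_coefM -gab (monicP gm).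
have Hsz : size g = (size a + size b).-1 by rewrite gab size_mul.
have [Ha1|Ha1] := eqVneq (size a) 1%N.
  left; rewrite poly_unitE Ha1 /=; apply/unitrP; exists (lead_coef b).
  by rewrite lead_coefE Ha1 /= in Hl; rewrite mulrC Hl.
right; have := Hg a Ha1; rewrite gab dvdp_mulr ?dvdpp // -gab => /(_ isT) /eqp_size Hsa.
have Hb1 : size b = 1%N.
  move: Hsz; rewrite -Hsa; move: (size_poly_gt0 a) (size_poly_gt0 b).
  rewrite a0 b0 => /idP H1 /idP H2; move: (size a) (size b) H1 H2 => x y; lia.
have Hbc := size1_polyC (eq_leq Hb1); move: Hl b0; rewrite Hbc lead_coefC polyC_eq0 => Hl c0.
rewrite poly_unitE size_polyC c0 coefC /=; apply/unitrP; exists (lead_coef a).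
by split; [exact: Hl | rewrite mulrC; exact: Hl].
Qed.

Lemma rowfreeP' (F : fieldType) m n (M : 'M[F]_(m, n)) :
  (forall u : 'rV_m, u *m M = 0 -> u = 0) -> row_free M.
Proof.
move=> H; rewrite -kermx_eq0; apply/eqP/row_matrixP => i; rewrite row0.
by apply: H; rewrite -row_mul mulmx_ker row0.
Qed.

Lemma colmx_free (F : fieldType) d m n (X : 'M[F]_(d, n)) (W : 'M[F]_(m, n)) :
  row_free W -> (forall w : 'rV_d, (w *m X <= W)%MS -> w = 0) ->
  row_free (col_mx X W).
Proof.
move=> fW HX; apply: rowfreeP' => u.
rewrite -[u]hsubmxK mul_row_col => /eqP; rewrite addr_eq0 => /eqP Hu.
have Hl : lsubmx u = 0 by apply: HX; rewrite Hu -mulNmx submxMl.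
move: Hu; rewrite Hl mul0mx => /esym /eqP; rewrite oppr_eq0 => /eqP Hr.
have Hr' : rsubmx u = 0.
  by apply: (row_free_inj fW); rewrite Hr mul0mx.
by rewrite Hr' row_mx0.
Qed.

Lemma blk_map (R S : comNzRingType) (f : {rmorphism R -> S}) n' (N : 'M[R]_n'.+1) d v :
  map_mx f (blk N d v) = blk (map_mx f N) d (map_mx f v).
Proof.
apply/row_matrixP => i; rewrite /blk -map_row !rowK map_mxM.
by rewrite rmorphXn.
Qed.

Definition fam n (N : 'M[int]_n) (s : seq ({poly int} * 'rV[int]_n)) :=
  \mxcol_(i < size s) blk N (size (nth (0,0) s i).1).-1 (nth (0,0) s i).2.

Definition good n' (N : 'M[int]_n'.+1) (x : {poly int} * 'rV[int]_n'.+1) :=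
  x.1 \is monic /\ irreducible_poly x.1 /\ x.2 *m horner_mx N x.1 = 0.

Lemma famN n' (N : 'M[int]_n'.+1) s : (forall x, x \in s -> good N x) ->
  fam N s *m N = \mxdiag_(i < size s) companionmx (nth (0,0) s i).1 *m fam N s.
Proof.
move=> Hs; rewrite /fam mxcol_mul mul_mxdiag_mxcol; apply: eq_mxcol => i.
have [Hm [_ Hv]] := Hs _ (mem_nth (0,0) (ltn_ord i)).
exact: blk_companion.
Qed.

Notation Qmx := (map_mx (intr : int -> rat)).

Lemma Qmx_inj m n : injective (Qmx : 'M[int]_(m, n) -> 'M[rat]_(m, n)).
Proof.
move=> A B H; apply/matrixP => i j; move/matrixP: H => /(_ i j); rewrite !mxE.
exact: intr_inj.
Qed.

Definition szs n (s : seq ({poly int} * 'rV[int]_n)) :=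
  (\sum_(i < size s) (size (nth (0%R,0%R) s i).1).-1)%N.

Lemma build_step n' (N : 'M[int]_n'.+1)
  (SS : forall k : {poly rat}, horner_mx (Qmx N) k ^+ 2 = 0 ->
     horner_mx (Qmx N) k = 0) s :
  (forall x, x \in s -> good N x) -> row_free (Qmx (fam N s)) ->
  (szs s < n'.+1)%N ->
  exists x, good N x /\ row_free (Qmx (fam N (x :: s))) /\ (1 <= (size x.1).-1)%N.
Proof.
move=> Hs fW Hlt.
set W := Qmx (fam N s); set NQ := Qmx N.
have sW : stablemx W NQ.
  by rewrite /W /NQ -map_mxM famN // map_mxM submxMl.
have [u uW] : exists u : 'rV_n'.+1, ~~ (u <= W)%MS.
  have : ~~ (1%:M <= W)%MS.
    apply/negP => H; have := mxrankS H; rewrite mxrank1.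
    move: fW; rewrite /row_free => /eqP ->; rewrite leqNgt.
    by move: Hlt; rewrite /szs => ->.
  by move/row_subPn => [i Hi]; exists (row i 1%:M).
have [g [Hg [gm [v [vW vg]]]]] := find_vec SS sW uW.
have gchar : g %| map_poly intr (char_poly N).
  by rewrite map_char_poly; apply: dvdp_trans gm (mxminpoly_dvd_char _).
have [g2 [a a0 Hga] [r Hr]] := dvdpP_rat_int gchar.
set c := lead_coef r.
have Hc : lead_coef g2 * c = 1.
  by rewrite /c -lead_coefM -Hr (monicP (char_poly_monic _)).
pose g3 := c *: g2.
have g3m : g3 \is monic by rewrite monicE lead_coefZ mulrC Hc.
have c0 : c != 0 by apply/eqP => c0; move: Hc; rewrite c0 mulr0 => /eqP; rewrite eq_sym oner_eq0.
have Hg3 : map_poly intr g3 = ((c%:~R : rat) / a) *: g.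
  by rewrite /g3 map_polyZ /= Hga scalerA mulfVK.
have b0 : ((c%:~R : rat) / a) != 0 by rewrite mulf_neq0 ?invr_eq0 ?intr_eq0.
have irrg3 : irreducible_poly g3.
  by apply/irreducible_rat_int; rewrite Hg3; apply: irr_scale.
have [D [vZ [D0 HvZ]]] := rV_scale v.
have vZg : vZ *m horner_mx N g3 = 0.
  apply: Qmx_inj.
  rewrite map_mxM map_horner_mx /= -/NQ Hg3 HvZ map_mx0.
  by rewrite linearZ /= -scalemxAr -scalemxAl vg !scaler0.
have vZW : ~~ (Qmx vZ <= W)%MS.
  apply: contra vW; rewrite HvZ => H.
  have -> : v = (D%:~R)^-1 *: (D%:~R *: v) by rewrite scalerA mulVf ?scale1r ?intr_eq0.
  exact: scalemx_sub.
exists (g3, vZ); split; first by [].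
split; last first.
  by case: irrg3 => H _; rewrite /= -ltnS prednK // ltnW.
rewrite /fam mxcol_recu map_castmx row_free_castmx map_col_mx.
apply: colmx_free; first exact: fW.
rewrite blk_map.
apply: (blk_indep (g := map_poly (intr : int -> rat) g3) _ sW _ _ vZW).
- by rewrite /= size_rat_int_poly; case: irrg3 => H _; rewrite prednK // ltnW.
- by apply/irreducible_rat_int.
- by rewrite -map_horner_mx -map_mxM vZg map_mx0.
Qed.

Lemma row_free0 (F : fieldType) m n (A : 'M[F]_(m, n)) : m = 0%N -> row_free A.
Proof.
move=> m0; move: A; rewrite m0 => A.
by rewrite /row_free -leqn0 rank_leq_row.
Qed.

Lemma szs_cons n (x : {poly int} * 'rV[int]_n) s :
  szs (x :: s) = ((size x.1).-1 + szs s)%N.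
Proof. by rewrite /szs big_ord_recl. Qed.

Lemma build_all n' (N : 'M[int]_n'.+1)
  (SS : forall k : {poly rat}, horner_mx (Qmx N) k ^+ 2 = 0 ->
     horner_mx (Qmx N) k = 0) :
  exists s, (forall x, x \in s -> good N x) /\ row_free (Qmx (fam N s)) /\
    szs s = n'.+1.
Proof.
suff H : forall k s, (n'.+1 - szs s <= k)%N -> (forall x, x \in s -> good N x) ->
    row_free (Qmx (fam N s)) ->
  exists s, (forall x, x \in s -> good N x) /\ row_free (Qmx (fam N s)) /\
    szs s = n'.+1.
  apply: (H _ [::] (leqnn _)) => //.
  by apply: row_free0; rewrite big_ord0.
elim=> [|k IH] s Hk Hs fW.
  have Hle : (szs s <= n'.+1)%N.
    by move: fW; rewrite /row_free /szs => /eqP <-; apply: rank_leq_col.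
  exists s; split => //; split => //; apply/eqP; rewrite eqn_leq Hle /=.
  by rewrite -subn_eq0 -leqn0.
have Hle : (szs s <= n'.+1)%N.
  by move: fW; rewrite /row_free /szs => /eqP <-; apply: rank_leq_col.
have [Heq|Hlt] := eqVneq (szs s) n'.+1; first by exists s.
have Hlt' : (szs s < n'.+1)%N by rewrite ltn_neqAle Hlt Hle.
have [x [Hx [fW' Hx1]]] := build_step SS Hs fW Hlt'.
apply: (IH (x :: s)) => //.
- rewrite szs_cons; move: Hk Hx1 Hlt'; move: (szs s) ((size x.1).-1) => a b; lia.
- by move=> y; rewrite in_cons => /orP [/eqP ->|]; [exact: Hx | exact: Hs].
Qed.

Lemma cast_rel m1 m2 n (e : m1 = m2) (W : 'M[int]_(m1, n)) (D : 'M[int]_m1)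
  (N : 'M[int]_n) :
  W *m N = D *m W -> castmx (e, erefl) W *m N = castmx (e, e) D *m castmx (e, erefl) W.
Proof. by case: m2 / e; rewrite !castmx_id. Qed.

Lemma core n' (N : 'M[int]_n'.+1)
  (SS : forall k : {poly rat}, horner_mx (Qmx N) k ^+ 2 = 0 ->
     horner_mx (Qmx N) k = 0) :
  exists (P : 'M[int]_n'.+1) (k : nat) (sz : 'I_k -> nat)
    (Bl : forall i : 'I_k, 'M[int]_(sz i)) (e : (\sum_(i < k) sz i)%N = n'.+1),
  \det P != 0 /\ P *m N = castmx (e, e) (\mxdiag_(i < k) Bl i) *m P /\
  forall i : 'I_k, irreducible_over_Z (char_poly (Bl i)).
Proof.
have [s [Hs [fW Hsz]]] := build_all SS.
exists (castmx (Hsz, erefl) (fam N s)), (size s),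
  (fun i => (size (nth (0,0) s i).1).-1),
  (fun i => companionmx (nth (0,0) s i).1), Hsz.
split.
  rewrite -(intr_eq0 rat) -det_map_mx -unitfE -unitmxE -row_free_unit map_castmx.
  by rewrite row_free_castmx.
split; first by apply: cast_rel; apply: famN.
move=> i; have [Hm [Hi _]] := Hs _ (mem_nth (0,0) (ltn_ord i)).
by rewrite companionmxK //; apply: irrZ.
Qed.

Lemma transfer (K : comNzRingType) n' q' (A : 'M[K]_n'.+1) (B : 'M[K]_(n'.+1, q'.+1))
  (M : 'M[K]_q'.+1) :
  A *m B = B *m M -> forall k, horner_mx A k *m B = B *m horner_mx M k.
Proof.
move=> H; elim/poly_ind => [|k c IH]; first by rewrite !rmorph0 mul0mx mulmx0.
rewrite !rmorphD !rmorphM /= !horner_mx_X !horner_mx_C -!mulmxE mulmxDl mulmxDr.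
rewrite -mulmxA H mulmxA IH -mulmxA; congr (_ + _).
by rewrite mul_scalar_mx mul_mx_scalar.
Qed.

Lemma trmxXn (K : comNzRingType) n (A : 'M[K]_n.+1) i : (A ^+ i)^T = A^T ^+ i.
Proof.
elim: i => [|i IH]; first by rewrite !expr0 trmx1.
by rewrite exprS -mulmxE trmx_mul IH mulmxE -exprSr.
Qed.

Lemma horner_trmx (K : comNzRingType) n (A : 'M[K]_n.+1) k :
  (horner_mx A k)^T = horner_mx A^T k.
Proof.
rewrite !horner_mx_sum linear_sum; apply: eq_bigr => i _.
by rewrite linearZ /= trmxXn.
Qed.

Lemma char_poly_trmx (K : comNzRingType) n (A : 'M[K]_n) :
  char_poly A^T = char_poly A.
Proof.
rewrite /char_poly -det_tr; congr (\det _).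
apply/matrixP => i j; rewrite !mxE.
by case: (eqVneq i j) => [->|ij]; rewrite ?eqxx // eq_sym (negPf ij).
Qed.

Lemma delta_entry (K : comNzRingType) n (Km : 'M[K]_n) (i j : 'I_n) :
  ((delta_mx i (0 : 'I_1) : 'cV_n)^T *m Km *m (delta_mx j (0 : 'I_1) : 'cV_n)) 0 0 = Km i j.
Proof. by rewrite trmx_delta -rowE -colE !mxE. Qed.

Lemma scal_mx (R : realType) n (S : 'M[R]_n) (M : 'M[R]_n) u v :
  scal S (M *m u) (M *m v) = scal (M^T *m S *m M) u v.
Proof. by rewrite /scal trmx_mul !mulmxA. Qed.

Lemma posdef0 (R : realType) n (S : 'M[R]_n) (x : 'cV_n) :
  scalar_product S -> scal S x x = 0 -> x = 0.
Proof.
move=> [_ HS] H; apply/eqP; apply/negP => /negP /HS; rewrite H.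
by rewrite ltxx.
Qed.


Lemma normal_nil (R : realType) q' (S M : 'M[R]_q'.+1) :
  scalar_product S ->
  (exists mu : R, 0 < mu /\
     forall u v : 'cV[R]_q'.+1, scal S (M *m u) (M *m v) = mu ^+ 2 * scal S u v) ->
  forall k, horner_mx M k ^+ 2 = 0 -> horner_mx M k = 0.
Proof.
move=> HS [mu [mu0 Hmu]] k Hk.
have MSM : M^T *m S *m M = mu ^+ 2 *: S.
  apply/matrixP => i j; rewrite -[LHS]delta_entry -/(scal _ _ _) -scal_mx Hmu.
  by rewrite /scal delta_entry mxE.
have Mu : M \in unitmx.
  rewrite unitmxE unitfE; apply/negP => /eqP Hd.
  have /det0P [v v0 vM] : \det M^T == 0 by rewrite det_tr Hd.
  have Hc : M *m v^T = 0 by rewrite -[M]trmxK -trmx_mul vM trmx0.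
  have v0' : v^T != 0 by apply: contra v0 => /eqP H; rewrite -[v]trmxK H trmx0.
  have := Hmu v^T v^T; rewrite Hc.
  have -> : scal S 0 0 = 0 by rewrite /scal mulmx0 mxE.
  case: HS => _ /(_ _ v0') Hp.
  move=> /esym /eqP; rewrite mulf_eq0 expf_eq0 /= (gt_eqF mu0) /=.
  by rewrite (gt_eqF Hp).
pose M' := mu ^+ 2 *: invmx M.
have HMS : M^T *m S = S *m M'.
  by rewrite /M' -scalemxAr scalemxAl -MSM mulmxK.
have cM : comm_mx M M'.
  by rewrite /comm_mx /M' -scalemxAr -scalemxAl mulmxV // mulVmx.
set T := horner_mx M k; set T' := horner_mx M' k.
have HT : T^T *m S = S *m T'.
  by rewrite /T horner_trmx; apply: transfer.
have HT' : T'^T *m S = S *m T.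
  case: HS => Ssym _.
  by rewrite -[S in LHS]Ssym -trmx_mul -HT trmx_mul trmxK Ssym.
have cT : T *m T' = T' *m T.
  by apply: comm_horner_mx; apply: comm_mx_horner.
have TT : T *m T = 0 by rewrite mulmxE -expr2.
have Tx : forall x : 'cV_q'.+1, T *m x = 0.
  move=> x; set w := T *m x.
  have Tw : T *m w = 0 by rewrite /w mulmxA TT mul0mx.
  have T'w : T' *m w = 0.
    apply: (posdef0 HS); rewrite scal_mx /scal HT' -(mulmxA S T T') cT mulmxA.
    by rewrite -!mulmxA Tw !mulmx0 mxE.
  apply: (posdef0 HS); rewrite scal_mx /scal HT !mulmxA -(mulmxA _ T x) -/w.
  by rewrite -(mulmxA _ T' w) T'w !mulmx0 mxE.
apply/matrixP => i j; have := Tx (delta_mx j 0); rewrite -colE => /matrixP /(_ i 0).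
by rewrite !mxE.
Qed.

Lemma dens_int (R : realType) n q (B1 : 'M[R]_(n, q)) :
  (forall (x : 'cV[R]_n) (eps : R), 0 < eps ->
     exists (c : 'cV[R]_q) (z : 'cV[int]_n),
       forall i, `| x i 0 - (B1 *m c) i 0 - (z i 0)%:~R | < eps) ->
  forall a : 'rV[int]_n, mxZR R a *m B1 = 0 -> a = 0.
Proof.
move=> Hd a Ha; apply/rowP => j; rewrite mxE; apply/eqP; apply/negPn/negP => aj0.
have aj0' : ((a 0 j)%:~R : R) != 0 by rewrite intr_eq0.
pose W := \sum_i `|(a 0 i)%:~R : R|.
have W0 : 0 <= W by apply: sumr_ge0 => i _; apply: normr_ge0.
pose x : 'cV[R]_n := \col_i (if i == j then (2 * (a 0 j)%:~R)^-1 else 0).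
pose eps : R := (4 * (W + 1))^-1.
have eps0 : 0 < eps by rewrite invr_gt0; clear -W0; lra.
have [c [z Hz]] := Hd x eps eps0.
pose y i := x i 0 - (B1 *m c) i 0 - (z i 0)%:~R.
have E1 : \sum_i (a 0 i)%:~R * x i 0 = 2^-1 :> R.
  rewrite (bigD1 j) //= big1 ?addr0 => [|i /negPf ij]; last by rewrite mxE ij mulr0.
  by rewrite mxE eqxx invfM mulrCA mulfV // mulr1.
have E2 : \sum_i (a 0 i)%:~R * (B1 *m c) i 0 = 0 :> R.
  have := congr1 (fun M : 'M[R]_(1,1) => M 0 0) (congr1 (fun M : 'M[R]_(1,q) => M *m c) Ha).
  rewrite /= -mulmxA mul0mx [X in _ = X]mxE mxE => H; apply: (etrans _ H).
  by apply: eq_bigr => i _; rewrite /mxZR; congr (_ * _); rewrite [RHS]mxE.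
have E3 : \sum_i (a 0 i)%:~R * ((z i 0)%:~R : R) = (\sum_i a 0 i * z i 0)%:~R.
  by rewrite rmorph_sum; apply: eq_bigr => i _; rewrite rmorphM.
set m := \sum_i a 0 i * z i 0 in E3.
have E : \sum_i (a 0 i)%:~R * y i = 2^-1 - (m%:~R : R).
  rewrite /y; under eq_bigr do rewrite !mulrBr.
  by rewrite !sumrB E1 E2 E3 subr0.
have Bnd : `|\sum_i (a 0 i)%:~R * y i| < (4^-1 : R).
  apply: le_lt_trans; first exact: ler_norm_sum.
  apply: (@le_lt_trans _ _ (W * eps)).
    rewrite /W mulr_suml; apply: ler_sum => i _; rewrite normrM.
    by apply: ler_wpM2l; [apply: normr_ge0 | apply/ltW/Hz].
  have -> : (4^-1 : R) = (W + 1) * eps.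
    have W1 : W + 1 != 0 by apply/negP => /eqP H; clear -W0 H; lra.
    by rewrite /eps invfM mulrCA mulfV ?mulr1.
  by rewrite ltr_pM2r //; clear -W0; lra.
move: Bnd; rewrite E ltr_norml => /andP [H1 H2].
have [m0|m0] := lerP m 0.
  have : (m%:~R : R) <= 0 by rewrite -(mulr0z (1 : R)) ler_int.
  clear -H1 H2; lra.
have : (1 : R) <= m%:~R by rewrite -(mulr1z (1 : R)) ler_int -gtz0_ge1.
clear -H1 H2; lra.
Qed.

Lemma dens_rat (R : realType) n q (B1 : 'M[R]_(n, q)) :
  (forall a : 'rV[int]_n, mxZR R a *m B1 = 0 -> a = 0) ->
  forall w : 'rV[rat]_n, map_mx ratr w *m B1 = 0 -> w = 0.
Proof.
move=> HB w Hw; have [D [vZ [D0 HvZ]]] := rV_scale w.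
have HZ : mxZR R vZ = (D%:~R : R) *: map_mx ratr w.
  apply/rowP => i; rewrite /mxZR !mxE.
  have := congr1 (fun M : 'M[rat]_(1, n) => ratr (M 0 i) : R) HvZ.
  by rewrite /= !mxE ratr_int rmorphM /= ratr_int => ->.
have vZ0 : vZ = 0 by apply: HB; rewrite HZ -scalemxAl Hw scaler0.
move: HvZ; rewrite vZ0 map_mx0 => /esym /eqP; rewrite scaler_eq0 intr_eq0 (negPf D0).
by move/eqP.
Qed.

Lemma B1inj (R : realType) q r (B1 : 'M[R]_(q + r, q)) (B2 : 'M[R]_(q + r, r)) m
  (X : 'M[R]_(q, m)) :
  row_mx B1 B2 \in unitmx -> B1 *m X = 0 -> X = 0.
Proof.
move=> Hu HX.
have : row_mx B1 B2 *m col_mx X (0 : 'M_(r, m)) = 0 by rewrite mul_row_col HX mulmx0 addr0.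
move/(congr1 (mulmx (invmx (row_mx B1 B2)))); rewrite mulKmx // mulmx0 => H.
apply/matrixP => i j; have := congr1 (fun M : 'M[R]_(q + r, m) => M (lshift r i) j) H.
by rewrite /= col_mxEu !mxE.
Qed.

Lemma SS_A (R : realType) q' r (B1 : 'M[R]_(q'.+1 + r, q'.+1))
  (B2 : 'M[R]_(q'.+1 + r, r)) (S M1 : 'M[R]_q'.+1) (A : 'M[int]_(q'.+1 + r)) :
  row_mx B1 B2 \in unitmx ->
  (forall (x : 'cV[R]_(q'.+1 + r)) (eps : R), 0 < eps ->
     exists (c : 'cV[R]_q'.+1) (z : 'cV[int]_(q'.+1 + r)),
       forall i, `| x i 0 - (B1 *m c) i 0 - (z i 0)%:~R | < eps) ->
  scalar_product S ->
  mxZR R A *m B1 = B1 *m M1 ->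
  (exists mu : R, 0 < mu /\
     forall u v : 'cV[R]_q'.+1, scal S (M1 *m u) (M1 *m v) = mu ^+ 2 * scal S u v) ->
  forall k : {poly rat}, horner_mx (Qmx A) k ^+ 2 = 0 -> horner_mx (Qmx A) k = 0.
Proof.
move=> Hu Hd HS HAB Hsim k Hk.
have HAR : map_mx ratr (Qmx A) = mxZR R A.
  by apply/matrixP => i j; rewrite /mxZR !mxE ratr_int.
set H := horner_mx (Qmx A) k.
pose kR := map_poly (ratr : rat -> R) k.
have HR : map_mx ratr H = horner_mx (mxZR R A) kR by rewrite map_horner_mx HAR.
pose T := horner_mx M1 kR.
have HT : map_mx ratr H *m B1 = B1 *m T by rewrite HR; apply: transfer.
have HT2 : T ^+ 2 = 0.
  apply: (B1inj Hu); rewrite expr2 -mulmxE mulmxA -HT -mulmxA -HT mulmxA.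
  by rewrite -map_mxM mulmxE -expr2 Hk map_mx0 mul0mx.
have T0 := normal_nil HS Hsim HT2.
have HB0 : map_mx ratr H *m B1 = 0 by rewrite HT /T T0 mulmx0.
apply/row_matrixP => i; rewrite row0.
apply: (dens_rat (dens_int Hd)).
by rewrite map_row -row_mul HB0 row0.
Qed.

Lemma mxZRE (R : realType) m n (M : 'M[int]_(m, n)) : mxZR R M = map_mx (intr : int -> R) M.
Proof. by []. Qed.

Unset Implicit Arguments.

Theorem mainTheorem15 (R : realType) (q r : nat)
  (B1 : 'M[R]_(q + r, q)) (B2 : 'M[R]_(q + r, r))
  (S : 'M[R]_q) (A : 'M[int]_(q + r)) (M1 : 'M[R]_q) (M2 : 'M[R]_r) :
  (1 <= q)%N ->
  row_mx B1 B2 \in unitmx ->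
  (forall (x : 'cV[R]_(q + r)) (eps : R), 0 < eps ->
     exists (c : 'cV[R]_q) (z : 'cV[int]_(q + r)),
       forall i, `| x i 0 - (B1 *m c) i 0 - (z i 0)%:~R | < eps) ->
  scalar_product S ->
  A \in unitmx ->
  mxZR R A *m B1 = B1 *m M1 ->
  mxZR R A *m B2 = B2 *m M2 ->
  (exists mu : R, 0 < mu /\
     forall u v : 'cV[R]_q, scal S (M1 *m u) (M1 *m v) = mu ^+ 2 * scal S u v) ->
  exists (P : 'M[int]_(q + r)) (k : nat) (sz : 'I_k -> nat)
         (Bl : forall i : 'I_k, 'M[int]_(sz i))
         (e : (\sum_(i < k) sz i)%N = (q + r)%N),
    mxZR R P \in unitmx /\
    mxZR R A *m mxZR R P = mxZR R P *m mxZR R (castmx (e, e) (\mxdiag_(i < k) Bl i)) /\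
    forall i : 'I_k, irreducible_over_Z (char_poly (Bl i)).
Proof.
case: q B1 B2 S A M1 => [//|q'] B1 B2 S A M1 Hq Hu Hd HS HAu HAB1 HAB2 Hsim.
have SS := SS_A Hu Hd HS HAB1 Hsim.
have SST : forall k : {poly rat}, horner_mx (Qmx A^T) k ^+ 2 = 0 ->
    horner_mx (Qmx A^T) k = 0.
  have -> : Qmx A^T = (Qmx A)^T by apply/matrixP => i j; rewrite !mxE.
  move=> k; rewrite -horner_trmx -trmxXn => H2.
  have H2' : horner_mx (Qmx A) k ^+ 2 = 0 by rewrite -[LHS]trmxK H2 trmx0.
  by rewrite (SS _ H2') trmx0.
have [P [k [sz [Bl [e [dP [HP Hirr]]]]]]] := core SST.
exists P^T, k, sz, (fun i => (Bl i)^T), e.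
split.
  by rewrite mxZRE unitmxE unitfE det_map_mx det_tr intr_eq0.
split; last by move=> i; rewrite char_poly_trmx; exact: Hirr.
have HPT := congr1 trmx HP; rewrite !trmx_mul trmxK in HPT.
rewrite !mxZRE -!map_mxM HPT trmx_cast tr_mxdiag /=.
by [].
Qed.
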